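(* Let $X$ be the vertex set of a dual polar graph of diameter $d$ with distance $\partial$ and base vertex $u_0\in X$. Let $x,y\in X$, $U=x\cap y$, and $X'=\{z\in X: U\subseteq z\}$. For every $z\in X$ with $f_x(z)=f_y(z)=1$ there is a unique $z'\in X'$ such that $f_x(z')=f_y(z')=1$ and $f_{z'}(z)=1$.
   Context: Let $V$ be a finite-dimensional vector space over a finite field with a non-degenerate alternating, Hermitian, or quadratic form of Witt index $d$; $X$ is the set of maximal totally isotropic subspaces (dimension $d$), adjacent iff their intersection has dimension $d-1$, with distance $\partial(x,y)=d-\dim(x\cap y)$. For $z\in X$, $f_z:X\to\mathbb{R}$ is defined by $f_z(w)=1$ if $\partial(u_0,z)+\partial(z,w)=\partial(u_0,w)$ and $f_z(w)=0$ otherwise. *)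

(* Defs.v *)
From HB Require Import structures.
From mathcomp Require Import all_boot all_order all_algebra.
Set Implicit Arguments. Unset Strict Implicit. Unset Printing Implicit Defensive.
Import GRing.Theory.
Local Open Scope ring_scope.

(* V = 'rV[F]_n over a finite field F, carrying one of the three kinds of
   forms of a finite classical polar space, given by Gram matrices:
   - AltForm M       : B(u,v) = u M v^T          (alternating)
   - HermForm M s    : B(u,v) = u M s(v)^T       (Hermitian w.r.t. s)
   - QuadForm A      : Q(v)   = v A v^T          (quadratic), with polar form
                       B(u,v) = Q(u+v) - Q(u) - Q(v). *)
Inductive polar_form (F : finFieldType) (n : nat) : Type :=
| AltForm of 'M[F]_n
| HermForm of 'M[F]_n & {rmorphism F -> F}
| QuadForm of 'M[F]_n.

Section PolarDefs.
Variables (F : finFieldType) (n : nat).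

Definition bil (M : 'M[F]_n) (u v : 'rV[F]_n) : F := (u *m M *m v^T) 0 0.
Definition sesq (M : 'M[F]_n) (s : {rmorphism F -> F}) (u v : 'rV[F]_n) : F :=
  (u *m M *m (map_mx s v)^T) 0 0.
Definition quad (A : 'M[F]_n) (v : 'rV[F]_n) : F := bil A v v.
Definition quad_polar (A : 'M[F]_n) (u v : 'rV[F]_n) : F :=
  quad A (u + v) - quad A u - quad A v.

Definition pf_nondegenerate (pf : polar_form F n) : Prop :=
  match pf with
  | AltForm M => M \in unitmx /\ (forall u, bil M u u = 0)
  | HermForm M s =>
      [/\ M \in unitmx, (forall a, s (s a) = a), (exists a, s a != a)
        & (map_mx s M)^T = M]
  | QuadForm A =>
      forall v, quad A v = 0 -> (forall w, quad_polar A v w = 0) -> v = 0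
  end.

Definition totally_isotropic (pf : polar_form F n)
    (W : {vspace 'rV[F]_n}) : Prop :=
  match pf with
  | AltForm M => forall u v, u \in W -> v \in W -> bil M u v = 0
  | HermForm M s => forall u v, u \in W -> v \in W -> sesq M s u v = 0
  | QuadForm A => forall u, u \in W -> quad A u = 0
  end.

Definition witt_index (pf : polar_form F n) (d : nat) : Prop :=
  (exists W, totally_isotropic pf W /\ \dim W = d) /\
  (forall W, totally_isotropic pf W -> (\dim W <= d)%N).

Definition dp_vertex (pf : polar_form F n) (d : nat)
    (x : {vspace 'rV[F]_n}) : Prop :=
  totally_isotropic pf x /\ \dim x = d.

Definition dp_dist (d : nat) (x y : {vspace 'rV[F]_n}) : nat :=
  (d - \dim (x :&: y))%N.

Definition fz (d : nat) (u0 z w : {vspace 'rV[F]_n}) : nat :=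
  if (dp_dist d u0 z + dp_dist d z w == dp_dist d u0 w)%N then 1%N else 0%N.

End PolarDefs.

(* Main.v *)
Require Import Defs.
From HB Require Import structures.
From mathcomp Require Import all_boot all_order all_algebra.
From mathcomp Require Import ring zify.
Set Implicit Arguments. Unset Strict Implicit. Unset Printing Implicit Defensive.
Import GRing.Theory.
Local Open Scope ring_scope.

Section Forms.
Variables (F : finFieldType) (n : nat).
Implicit Types (pf : polar_form F n) (u v w : 'rV[F]_n).

Definition fN pf : 'M[F]_n :=
  match pf with AltForm M => M | HermForm M _ => M | QuadForm A => A + A^T end.
Definition fg pf (v : 'rV[F]_n) : 'rV[F]_n :=
  match pf with HermForm _ s => map_mx s v | _ => v end.
Definition fs pf (c : F) : F :=
  match pf with HermForm _ s => s c | _ => c end.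
Definition bf pf u v : F := (u *m fN pf *m (fg pf v)^T) 0 0.
Definition sing pf u : Prop :=
  match pf with QuadForm A => quad A u = 0 | _ => True end.

Lemma fgD pf v w : fg pf (v + w) = fg pf v + fg pf w.
Proof. by case: pf => //= M s; rewrite map_mxD. Qed.
Lemma fgZ pf c v : fg pf (c *: v) = fs pf c *: fg pf v.
Proof. by case: pf => //= M s; rewrite map_mxZ. Qed.

Lemma bfDr pf u v w : bf pf u (v + w) = bf pf u v + bf pf u w.
Proof. by rewrite /bf fgD linearD /= mulmxDr mxE. Qed.
Lemma bfDl pf u v w : bf pf (u + v) w = bf pf u w + bf pf v w.
Proof. by rewrite /bf !mulmxDl mxE. Qed.
Lemma bfZr pf u c v : bf pf u (c *: v) = fs pf c * bf pf u v.
Proof. by rewrite /bf fgZ linearZ /= -scalemxAr mxE. Qed.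
Lemma bf0r pf u : bf pf u 0 = 0.
Proof. rewrite -(scale0r 0) bfZr; have ->: fs pf 0 = 0 by case: pf => //= M s; rewrite rmorph0.
by rewrite mul0r. Qed.

Lemma entry11_tr (A : 'M[F]_1) : A^T 0 0 = A 0 0.
Proof. by rewrite mxE. Qed.

Lemma add00 (M1 M2 : 'M[F]_1) : (M1 + M2) 0 0 = M1 0 0 + M2 0 0.
Proof. by rewrite mxE. Qed.

Lemma quad_polarE A u v : quad_polar A u v = (u *m (A + A^T) *m v^T) 0 0.
Proof.
rewrite /quad_polar /quad /bil linearD /= !mulmxDl !mulmxDr !add00.
have -> : (v *m A *m u^T) 0 0 = (u *m A^T *m v^T) 0 0.
  by rewrite -entry11_tr !trmx_mul trmxK mulmxA.
set a := (u *m A *m u^T) 0 0; set b := (v *m A *m v^T) 0 0.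
set c := (u *m A *m v^T) 0 0; set e := (u *m A^T *m v^T) 0 0.
rewrite mulmxDl add00 -/c -/e.
ring.
Qed.

Lemma ti_char pf W : totally_isotropic pf W <->
  (forall u, u \in W -> sing pf u) /\
  (forall u v, u \in W -> v \in W -> bf pf u v = 0).
Proof.
case: pf => [M|M s|A] /=.
- by split => [h|[_ h]] //; split => //.
- by split => [h|[_ h]] //; split => //.
- split => [h|[h _] //]; split => // u v hu hv.
  rewrite /bf /= -quad_polarE /quad_polar h ?memvD // h // h //.
  by rewrite !subr0.
Qed.

Lemma sing_add pf u v : sing pf u -> sing pf v -> bf pf u v = 0 -> sing pf (u + v).
Proof.
case: pf => //= A hu hv; rewrite /bf /= -quad_polarE /quad_polar hu hv !subr0 => ->.
done.
Qed.

Lemma bf_sym pf u v : pf_nondegenerate pf -> bf pf u v = 0 -> bf pf v u = 0.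
Proof.
case: pf => [M|M s|A] /=.
- move=> [_ halt] h.
  have := halt (u + v); rewrite /bil.
  have -> : (u + v) *m M *m (u + v)^T = (u + v) *m M *m (fg (AltForm M) (u + v))^T by [].
  move: (bfDl (AltForm M) u v (u + v)) (bfDr (AltForm M) u u v) (bfDr (AltForm M) v u v).
  rewrite /bf => -> -> ->; move: (halt u) (halt v); rewrite /bil /= => -> ->.
  move: h; rewrite /bf /= => ->. by rewrite add0r addr0 add0r.
- move=> [_ sK _ hM] h.
  have e : bf (HermForm M s) v u = s (bf (HermForm M s) u v).
    rewrite /bf /= -[in LHS]entry11_tr !trmx_mul trmxK mulmxA.
    have -> : s ((u *m M *m (map_mx s v)^T) 0 0) = (map_mx s (u *m M *m (map_mx s v)^T)) 0 0.
      by rewrite [RHS]mxE.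
    rewrite !map_mxM.
    have -> : map_mx s M = M^T by rewrite -[in RHS]hM trmxK.
    have -> : map_mx s (map_mx s v)^T = v^T by apply/matrixP => i j; rewrite !mxE sK.
    done.
  by rewrite e h rmorph0.
- move=> _ h; rewrite /bf /= -entry11_tr !trmx_mul trmxK mulmxA linearD /= trmxK addrC.
  exact: h.
Qed.
Definition Hp pf t : {vspace 'rV[F]_n} :=
  lker (linfun (mulmxr (fN pf *m (fg pf t)^T))).

Lemma mx11_eq0 (B : 'M[F]_1) : (B == 0) = (B 0 0 == 0).
Proof.
apply/eqP/eqP => [->|h]; first by rewrite mxE.
by apply/matrixP => i j; rewrite !ord1 h mxE.
Qed.

Lemma mem_Hp pf t u : (u \in Hp pf t) = (bf pf u t == 0).
Proof. by rewrite memv_ker lfunE /= mulmxA mx11_eq0. Qed.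

Lemma dim_Hp pf t (A : {vspace 'rV[F]_n}) : (\dim A <= \dim (A :&: Hp pf t) + 1)%N.
Proof.
rewrite -(limg_ker_dim (linfun (mulmxr (fN pf *m (fg pf t)^T))) A) leq_add2l.
apply: leq_trans (dimvS (subvf _)) _; rewrite dimvf.
by rewrite /dim /=.
Qed.

Definition Perp pf (ts : seq 'rV[F]_n) : {vspace 'rV[F]_n} :=
  foldr (fun t A => Hp pf t :&: A)%VS fullv ts.

Lemma mem_Perp pf ts u : (u \in Perp pf ts) = all (fun t => bf pf u t == 0) ts.
Proof.
elim: ts => [|t ts IH] /=; first by rewrite memvf.
by rewrite memv_cap mem_Hp IH.
Qed.

Lemma dim_Perp pf ts (A : {vspace 'rV[F]_n}) :
  (\dim A <= \dim (A :&: Perp pf ts) + size ts)%N.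
Proof.
elim: ts A => [|t ts IH] A /=; first by rewrite capvf addn0.
apply: leq_trans (IH A) _.
have hh := dim_Hp pf t (A :&: Perp pf ts).
rewrite -capvA (capvC (Perp pf ts)) capvA in hh.
rewrite capvA; move: hh; set a := \dim _; set b := \dim _; lia.
Qed.

Lemma perp_span pf u (T : {vspace 'rV[F]_n}) :
  u \in Perp pf (vbasis T) -> forall t, t \in T -> bf pf u t = 0.
Proof.
rewrite mem_Perp => /allP h t /coord_vbasis ->.
elim/big_ind: _ => [|a b ha hb|i _]; first exact: bf0r.
- by rewrite bfDr ha hb addr0.
- rewrite bfZr; apply/eqP; rewrite mulf_eq0; apply/orP; right.
  by apply: h; apply: mem_nth; rewrite size_tuple.
Qed.

Lemma span_perp pf u (T : {vspace 'rV[F]_n}) :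
  (forall t, t \in T -> bf pf u t = 0) -> u \in Perp pf (vbasis T).
Proof.
move=> h; rewrite mem_Perp; apply/allP => t /vbasis_mem ht.
by rewrite h.
Qed.

Lemma ti_sub pf (V W : {vspace 'rV[F]_n}) :
  totally_isotropic pf W -> (V <= W)%VS -> totally_isotropic pf V.
Proof.
move=> /ti_char [h1 h2] /subvP s; apply/ti_char; split => [u /s|u v /s hu /s hv].
  exact: h1.
exact: h2.
Qed.

Lemma ti_orth pf (W : {vspace 'rV[F]_n}) u v :
  totally_isotropic pf W -> u \in W -> v \in W -> bf pf u v = 0.
Proof. by move=> /ti_char [_ h]; apply: h. Qed.

Lemma ti_sum pf (A B : {vspace 'rV[F]_n}) : pf_nondegenerate pf ->
  totally_isotropic pf A -> totally_isotropic pf B ->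
  (forall a b, a \in A -> b \in B -> bf pf a b = 0) ->
  totally_isotropic pf (A + B).
Proof.
move=> hnd /ti_char [sA oA] /ti_char [sB oB] hAB; apply/ti_char; split.
  move=> w /memv_addP [a ha [b hb ->]]; apply: sing_add; [exact: sA|exact: sB|exact: hAB].
move=> u v /memv_addP [a ha [b hb ->]] /memv_addP [a' ha' [b' hb' ->]].
rewrite !bfDl !bfDr (oA a a') // (oB b b') // (hAB a b') // (bf_sym hnd (hAB _ _ ha' hb)).
by rewrite !addr0.
Qed.

Definition Bt (a w b : {vspace 'rV[F]_n}) :=
  ((a :&: b <= w)%VS && (w <= a :&: w + w :&: b)%VS).

Lemma fzE d (a w b : {vspace 'rV[F]_n}) :
  \dim a = d -> \dim w = d -> \dim b = d -> (fz d a w b = 1%N <-> Bt a w b).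
Proof.
move=> da dw db.
have h1 : (\dim (a :&: w) <= d)%N by rewrite -da dimvS // capvSl.
have h2 : (\dim (w :&: b) <= d)%N by rewrite -db dimvS // capvSr.
have h3 : (\dim (a :&: b) <= d)%N by rewrite -da dimvS // capvSl.
have hs := dimv_sum_cap (a :&: w) (w :&: b).
have sw : (a :&: w + w :&: b <= w)%VS by rewrite subv_add capvSr capvSl.
have dsw := dimvS sw; rewrite dw in dsw.
have si : ((a :&: w) :&: (w :&: b) <= a :&: b)%VS.
  by rewrite subv_cap; apply/andP; split;
     [apply: subv_trans (capvSl _ _) (capvSl _ _)|apply: subv_trans (capvSr _ _) (capvSr _ _)].
have dsi := dimvS si.
rewrite /fz /dp_dist /Bt; split.
- case: ifP => // /eqP he _.
  have e1 : \dim (a :&: w + w :&: b) = d by lia.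
  have e2 : \dim (a :&: w :&: (w :&: b)) = \dim (a :&: b) by lia.
  apply/andP; split.
    have : (a :&: w :&: (w :&: b) == a :&: b)%VS by rewrite eqEdim si e2 leqnn.
    move/eqP <-; apply: subv_trans (capvSr _ _) (capvSl _ _).
  have : (a :&: w + w :&: b == w)%VS by rewrite eqEdim sw e1 dw leqnn.
  by move/eqP ->.
- case/andP => sab swc.
  have e1 : \dim (a :&: w + w :&: b) = d.
    by apply/eqP; rewrite eqn_leq dsw -dw dimvS.
  have e2 : \dim (a :&: w :&: (w :&: b)) = \dim (a :&: b).
    apply/eqP; rewrite eqn_leq dsi dimvS // subv_cap; apply/andP; split;
      rewrite subv_cap sab ?capvSl ?capvSr //.
  by rewrite ifT //; apply/eqP; lia.
Qed.

End Forms.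

Theorem lemmaA4 (F : finFieldType) (n d : nat) (pf : polar_form F n)
    (u0 x y : {vspace 'rV[F]_n}) :
  pf_nondegenerate pf -> witt_index pf d ->
  dp_vertex pf d u0 -> dp_vertex pf d x -> dp_vertex pf d y ->
  forall z, dp_vertex pf d z ->
    fz d u0 x z = 1%N -> fz d u0 y z = 1%N ->
    exists! z', [/\ dp_vertex pf d z', (x :&: y <= z')%VS,
                    fz d u0 x z' = 1%N, fz d u0 y z' = 1%N &
                    fz d u0 z' z = 1%N].
Proof.
move=> hnd [_ hw] [tu0 du0] [tx dx] [ty dy] z [tz dz] fxz fyz.
have /andP [Cx xdec] := (fzE du0 dx dz).1 fxz.
have /andP [Cy ydec] := (fzE du0 dy dz).1 fyz.
set T := (x :&: y :&: u0)%VS.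
set P := Perp pf (vbasis T).
set z' := (T + z :&: P)%VS.
have TU : (T <= x :&: y)%VS by apply: capvSl.
have Tx : (T <= x)%VS by apply: subv_trans TU (capvSl _ _).
have Ty : (T <= y)%VS by apply: subv_trans TU (capvSr _ _).
have Tu0 : (T <= u0)%VS by apply: capvSr.
have CT : (u0 :&: z <= T)%VS.
  by rewrite !subv_cap Cx Cy capvSl.
have tT : totally_isotropic pf T by apply: ti_sub tx Tx.
have tzP : totally_isotropic pf (z :&: P)%VS by apply: ti_sub tz (capvSl _ _).
have tz' : totally_isotropic pf z'.
  rewrite /z'; apply: (ti_sum hnd tT tzP) => a b ha; rewrite memv_cap => /andP [_ hb].
  exact: (bf_sym hnd (perp_span hb ha)).
have zP : forall (W : {vspace 'rV[F]_n}) q, totally_isotropic pf W ->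
    (T <= W)%VS -> q \in W -> q \in z -> q \in (z :&: P)%VS.
  move=> W q tW TW qW qz; rewrite memv_cap qz /=; apply: span_perp => t tT'.
  by apply: ti_orth tW qW _; apply: (subvP TW).
have dz' : \dim z' = d.
  apply/eqP; rewrite eqn_leq hw //=.
  have hs := dimv_sum_cap T (z :&: P)%VS.
  have h1 : (\dim (T :&: (z :&: P)) <= \dim (T :&: z))%N.
    by apply: dimvS; apply: capvS => //; apply: capvSl.
  have sub : (z :&: Perp pf (vbasis (T :\: z)) <= z :&: P)%VS.
    apply/subvP => u; rewrite !memv_cap => /andP [uz uP]; rewrite uz /=.
    apply: span_perp => t; rewrite -{1}(addv_diff_cap T z) => /memv_addP [t1 ht1 [t2 ht2 ->]].
    rewrite bfDr (perp_span uP ht1) add0r.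
    by apply: ti_orth tz uz _; move: ht2; rewrite memv_cap => /andP [].
  have h2 := dim_Perp pf (vbasis (T :\: z)) z; rewrite size_tuple in h2.
  have h3 := dimvS sub.
  have h4 := dimv_sum_cap (T :\: z) (T :&: z); rewrite addv_diff_cap in h4.
  have h5 : (\dim ((T :\: z) :&: (T :&: z)) <= \dim ((T :\: z) :&: z))%N.
    by apply: dimvS; apply: capvS => //; apply: capvSr.
  rewrite capv_diff dimv0 in h5.
  rewrite /z'; lia.
have Bw : forall w : {vspace 'rV[F]_n}, totally_isotropic pf w -> \dim w = d ->
    (T <= w)%VS -> (u0 :&: z <= w)%VS -> (w <= u0 :&: w + w :&: z)%VS ->
    fz d u0 w z' = 1%N.
  move=> w tw dw Tw Cw wdec; apply/(fzE du0 dw dz'); apply/andP; split.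
    apply/subvP => v; rewrite memv_cap => /andP [vu /memv_addP [t ht [q hq ev]]].
    have qe : q = v - t by rewrite ev addrAC subrr add0r.
    have qu : q \in u0 by rewrite qe memvB // (subvP Tu0).
    move: hq; rewrite memv_cap => /andP [qz _].
    rewrite ev; apply: memvD; first exact: (subvP Tw).
    by apply: (subvP Cw); rewrite memv_cap qu qz.
  apply: subv_trans wdec _; apply: addvS => //; rewrite subv_cap capvSl /=.
  apply/subvP => q; rewrite memv_cap => /andP [qw qz].
  by apply: (subvP (addvSr T _)); apply: zP tw Tw qw qz.
exists z'; split.
  split.
  - by [].
  - apply/subvP => v; rewrite memv_cap => /andP [vx vy].
    have [p hp [q hq e]] := memv_addP (subvP xdec v vx).
    have [p' hp' [q' hq' e']] := memv_addP (subvP ydec v vy).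
    move: hp hq hp' hq'; rewrite !memv_cap => /andP [pu px] /andP [qx qz] /andP [p'u p'y] /andP [q'y q'z].
    have pC : p - p' \in (u0 :&: z)%VS.
      rewrite memv_cap memvB //=.
      have -> : p - p' = q' - q by rewrite -{1}(addrK q p) -e e' addrAC [p' + q']addrC addrK.
      by rewrite memvB.
    have py : p \in y by rewrite -(subrK p' p) memvD // (subvP Cy).
    have pT : p \in T by rewrite !memv_cap px py pu.
    rewrite e memv_add //; exact: zP tx Tx qx qz.
  - exact: Bw.
  - exact: Bw.
  - apply/(fzE du0 dz' dz); apply/andP; split.
      by apply: subv_trans CT (addvSl _ _).
    apply: addvS; first by rewrite subv_cap Tu0 addvSl.
    by rewrite subv_cap addvSr capvSl.
move=> w [[tw dw] Uw fxw fyw fwz].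
have /andP [_ _] := (fzE du0 dx dw).1 fxw.
have /andP [wx _] := (fzE du0 dx dw).1 fxw.
have /andP [wy _] := (fzE du0 dy dw).1 fyw.
have /andP [_ wdec] := (fzE du0 dw dz).1 fwz.
have Tw : (T <= w)%VS by apply: subv_trans TU Uw.
have wz' : (w <= z')%VS.
  apply: subv_trans wdec _; apply: addvS.
    by rewrite !subv_cap wx wy capvSl.
  apply/subvP => q; rewrite memv_cap => /andP [qw qz].
  exact: zP tw Tw qw qz.
by apply/eqP; rewrite eq_sym eqEdim wz' dz' dw leqnn.
Qed.
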